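(* Suppose that for every complement critical graph $G$ on $n$ vertices one has ${\rm mvr}(G)+{\rm mvr}(\overline{G})\le n+2$. Then for every simple graph $G$ on $n$ vertices, ${\rm mvr}(G)+{\rm mvr}(\overline{G})\le n+2$, and consequently also ${\rm mr}_+(G)+{\rm mr}_+(\overline{G})\le n+2$ and ${\rm mr}(G)+{\rm mr}(\overline{G})\le n+2$ for every simple graph $G$ on $n$ vertices.
   Context: All graphs are finite and simple with nonempty vertex set; $\overline{G}$ denotes the complement of $G$ and $|G|$ its number of vertices. An orthogonal vector representation of a graph $G=(V,E)$ in $\mathbb{R}^d$ is a map $\phi:V\to\mathbb{R}^d$ with $\phi(v)\neq 0$ for all $v$, and for distinct $u,v$: $\langle\phi(u),\phi(v)\rangle=0$ if and only if $uv\notin E$. The minimum vector rank ${\rm mvr}(G)$ is the smallest $d$ for which such a representation exists. For a graph $G$ on vertices $1,\dots,n$, ${\rm mr}(G)$ is the minimum rank of an $n\times n$ Hermitian matrix $M$ with $M_{ij}\neq 0$ (for $i\neq j$) if and only if $ij$ is an edge; ${\rm mr}_+(G)$ is the same minimum taken over positive semidefinite such $M$. A graph $G$ is complement critical if for every proper induced subgraph $H$ of $G$ (with nonempty vertex set), ${\rm mvr}(H)+{\rm mvr}(\overline{H})<{\rm mvr}(G)+{\rm mvr}(\overline{G})$. *)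

(* Defs.v *)
From HB Require Import structures.
From mathcomp Require Import all_boot all_order all_algebra.
From mathcomp Require Import boolp reals Rstruct complex.
Set Implicit Arguments. Unset Strict Implicit. Unset Printing Implicit Defensive.
Import Order.TTheory GRing.Theory Num.Theory.
Local Open Scope ring_scope.

Notation RR := Rdefinitions.R.
Notation CC := (complex RR).

Definition simple_graph (V : finType) (e : rel V) : Prop :=
  symmetric e /\ irreflexive e.

Definition compl_graph (V : finType) (e : rel V) : rel V :=
  fun x y => (x != y) && ~~ e x y.

Definition induced (V : finType) (e : rel V) (S : {set V})
  : rel {x : V | x \in S} := fun x y => e (val x) (val y).
Arguments induced {V} e S.

Definition dotR (d : nat) (a b : 'rV[RR]_d) : RR := (a *m b^T) 0 0.

Definition ortho_rep (V : finType) (e : rel V) (d : nat)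
    (phi : V -> 'rV[RR]_d) : Prop :=
  (forall v, phi v != 0) /\
  (forall u v, u != v -> (dotR (phi u) (phi v) == 0) = ~~ e u v).

Definition has_ortho_rep (V : finType) (e : rel V) (d : nat) : Prop :=
  exists phi : V -> 'rV[RR]_d, ortho_rep e phi.

(* Least nat satisfying a (classical) predicate, 0 if none exists. *)
Definition least_nat (P : nat -> Prop) : nat :=
  match pselect (exists n, `[< P n >]) with
  | left H => ex_minn H
  | right _ => 0%N
  end.

Definition mvr (V : finType) (e : rel V) : nat :=
  least_nat (fun d => has_ortho_rep e d).

Definition complement_critical (V : finType) (e : rel V) : Prop :=
  forall S : {set V}, S != set0 -> S \proper [set: V] ->
    (mvr (induced e S) + mvr (compl_graph (induced e S))
      < mvr e + mvr (compl_graph e))%N.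

Definition hermitian (n : nat) (M : 'M[CC]_n) : Prop :=
  forall i j, M j i = (M i j)^*.

Definition psd (n : nat) (M : 'M[CC]_n) : Prop :=
  hermitian M /\
  forall x : 'cV[CC]_n, 0 <= ((map_mx Num.conj x)^T *m M *m x) 0 0.

Definition fits (n : nat) (e : rel 'I_n) (M : 'M[CC]_n) : Prop :=
  forall i j, i != j -> (M i j != 0) = e i j.

Definition mr (n : nat) (e : rel 'I_n) : nat :=
  least_nat (fun r => exists M : 'M[CC]_n, [/\ hermitian M, fits e M & \rank M = r]).

Definition mr_plus (n : nat) (e : rel 'I_n) : nat :=
  least_nat (fun r => exists M : 'M[CC]_n, [/\ psd M, fits e M & \rank M = r]).

(* Main.v *)
Require Import Defs.
From HB Require Import structures.
From mathcomp Require Import all_boot all_order all_algebra.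
From mathcomp Require Import boolp reals Rstruct complex.
Set Implicit Arguments. Unset Strict Implicit. Unset Printing Implicit Defensive.
Import Order.TTheory GRing.Theory Num.Theory.
Local Open Scope ring_scope.

Lemma least_nat_le (P : nat -> Prop) m : P m -> (least_nat P <= m)%N.
Proof.
rewrite /least_nat; case: pselect => [H|H] // Pm.
by case: ex_minnP => k _; apply; apply/asboolP.
Qed.

Lemma least_natP (P : nat -> Prop) : (exists m, P m) -> P (least_nat P).
Proof.
move=> [m Pm]; rewrite /least_nat; case: pselect => [H|H].
  by case: ex_minnP => k /asboolP.
by exfalso; apply: H; exists m; apply/asboolP.
Qed.

Lemma least_nat_ext (P Q : nat -> Prop) :
  (forall d, P d <-> Q d) -> least_nat P = least_nat Q.
Proof. by move=> H; have -> : P = Q by apply: funext => d; apply: propext. Qed.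

Lemma rep_transfer (V W : finType) (e : rel V) (e' : rel W) (f : V -> W) d :
  injective f -> (forall x y, e' (f x) (f y) = e x y) ->
  has_ortho_rep e' d -> has_ortho_rep e d.
Proof.
move=> fi fe [phi [nz orth]]; exists (phi \o f); split; first by move=> v; exact: nz.
move=> u v uv /=.
by rewrite orth ?fe // (inj_eq fi).
Qed.

Lemma mvr_iso (V W : finType) (e : rel V) (e' : rel W) (f : V -> W) (g : W -> V) :
  cancel f g -> cancel g f -> (forall x y, e' (f x) (f y) = e x y) ->
  mvr e = mvr e' /\ mvr (compl_graph e) = mvr (compl_graph e').
Proof.
move=> fK gK fe.
have fe' : forall x y, e (g x) (g y) = e' x y by move=> x y; rewrite -fe !gK.
have cfe : forall x y, compl_graph e' (f x) (f y) = compl_graph e x y.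
  by move=> x y; rewrite /compl_graph fe (inj_eq (can_inj fK)).
have cfe' : forall x y, compl_graph e (g x) (g y) = compl_graph e' x y.
  by move=> x y; rewrite /compl_graph fe' (inj_eq (can_inj gK)).
split; apply: least_nat_ext => d; split.
- exact: rep_transfer (can_inj gK) fe'.
- exact: rep_transfer (can_inj fK) fe.
- exact: rep_transfer (can_inj gK) cfe'.
- exact: rep_transfer (can_inj fK) cfe.
Qed.

Lemma mvr_main :
  (forall (n : nat) (e : rel 'I_n), (0 < n)%N -> simple_graph e ->
     complement_critical e -> (mvr e + mvr (compl_graph e) <= n + 2)%N) ->
  forall (n : nat) (e : rel 'I_n), (0 < n)%N -> simple_graph e ->
    (mvr e + mvr (compl_graph e) <= n + 2)%N.
Proof.
move=> Hcc n; elim: n {-2}n (leqnn n) => [|N IH] n.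
  by rewrite leqn0 => /eqP ->.
move=> leN e n0 [esym eirr].
have [cc|ncc] := pselect (complement_critical e); first exact: Hcc.
have [S [S0 Sp]] : exists S : {set 'I_n}, [/\ S != set0, S \proper [set: 'I_n] &
   ~~ (mvr (induced e S) + mvr (compl_graph (induced e S))
      < mvr e + mvr (compl_graph e))%N].
  apply: contra_notP ncc => H S S0 Sp; apply: contra_notT H => H.
  by exists S; split.
rewrite -leqNgt => Hle.
pose T := {x : 'I_n | x \in S}.
pose e' : rel 'I_#|{: T}| := fun a b => induced e S (enum_val a) (enum_val b).
have fe : forall x y, e' (enum_rank x) (enum_rank y) = induced e S x y.
  by move=> x y; rewrite /e' !enum_rankK.
have [m1 m2] := @mvr_iso _ _ (induced e S) e' enum_rank enum_val
   enum_rankK enum_valK fe.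
have cardT : #|{: T}| = #|S| by rewrite card_sig.
have ltn : (#|S| < n)%N by have := proper_card Sp; rewrite cardsT card_ord.
apply: leq_trans Hle _; rewrite m1 m2.
apply: (@leq_trans (#|{: T}| + 2)); last by rewrite leq_add2r cardT ltnW.
apply: IH.
- by rewrite cardT -ltnS (leq_trans ltn).
- by rewrite cardT card_gt0.
- split; first by move=> a b; rewrite /e' /induced esym.
  by move=> a; rewrite /e' /induced eirr.
Qed.
Lemma dotRE d (a b : 'rV[RR]_d) : dotR a b = \sum_k a 0 k * b 0 k.
Proof. by rewrite /dotR mxE; apply: eq_bigr => k _; rewrite mxE. Qed.

Lemma rep_exists (V : finType) (e : rel V) : symmetric e ->
  has_ortho_rep e #|{: V * V}|.
Proof.
move=> esym.
pose ind (v : V) (p : V * V) : RR :=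
  if ((p.1 == v) || (p.2 == v)) && ((p.1 == p.2) || e p.1 p.2) then 1 else 0.
exists (fun v => \row_k ind v (enum_val k)); split.
  move=> v; apply/negP => /eqP H.
  have := congr1 (fun M : 'rV_ _ => M 0 (enum_rank (v, v))) H.
  rewrite !mxE enum_rankK /ind /= eqxx /= => /eqP; by rewrite oner_eq0.
move=> u v uv; rewrite dotRE.
case E: (e u v) => /=.
  apply/negbTE; apply: lt0r_neq0.
  rewrite (bigD1 (enum_rank (u, v))) //= !mxE enum_rankK /ind /=.
  rewrite !eqxx E (negbTE uv) /= mulr1.
  apply: (lt_le_trans ltr01).
  rewrite lerDl; apply: sumr_ge0 => k _; rewrite !mxE /ind.
  by apply: mulr_ge0; case: ifP.
apply/eqP; apply: big1 => k _; rewrite !mxE /ind.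
case: (enum_val k) => a b /=.
case: ifP => [/andP[/orP[/eqP au|/eqP bu] hab]|_]; last by rewrite mul0r.
- case: ifP => [/andP[/orP[/eqP av|/eqP bv] _]|_]; last by rewrite mulr0.
  + by move: uv; rewrite -au -av eqxx.
  + by move: hab; rewrite au bv (negbTE uv) E.
- case: ifP => [/andP[/orP[/eqP av|/eqP bv] _]|_]; last by rewrite mulr0.
  + by move: hab; rewrite av bu eq_sym (negbTE uv) esym E.
  + by move: uv; rewrite -bu -bv eqxx.
Qed.
Lemma dotRC d (a b : 'rV[RR]_d) : dotR a b = dotR b a.
Proof. by rewrite !dotRE; apply: eq_bigr => k _; rewrite mulrC. Qed.

Lemma conjR (x : RR) : Num.conj (real_complex RR x) = real_complex RR x.
Proof. by rewrite -[Num.conj _]/(conjc _) /= oppr0. Qed.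

Lemma gram_psd n d (e : rel 'I_n) (phi : 'I_n -> 'rV[RR]_d) :
  ortho_rep e phi ->
  exists M : 'M[CC]_n, [/\ psd M, fits e M & (\rank M <= d)%N].
Proof.
move=> [nz orth].
pose B : 'M[CC]_(n, d) := \matrix_(i, k) real_complex RR ((phi i) 0 k).
have ME : forall i j, (B *m B^T) i j = real_complex RR (dotR (phi i) (phi j)).
  move=> i j; rewrite mxE dotRE rmorph_sum; apply: eq_bigr => k _.
  by rewrite !mxE rmorphM.
exists (B *m B^T); split.
- split.
    move=> i j; rewrite !ME dotRC -[Num.conj _]/(conjc _) /= oppr0; reflexivity.
  move=> x.
  have H : (map_mx Num.conj x)^T *m B = (map_mx Num.conj (B^T *m x))^T.
    apply/matrixP => i k; rewrite !mxE.
    rewrite -[Num.conj _]/(conjc _) rmorph_sum; apply: eq_bigr => j _.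
    rewrite !mxE -[Num.conj _]/(conjc _) rmorphM /= oppr0 mulrC; reflexivity.
  rewrite (mulmxA (map_mx Num.conj x)^T B B^T) H -mulmxA mxE.
  apply: sumr_ge0 => k _; rewrite !mxE mulrC; exact: mulcJ_ge0.
- move=> i j ij; rewrite ME fmorph_eq0.
  have := orth i j ij; case: (e i j) => /= ->; by [].
- by apply: leq_trans (mxrankM_maxl _ _) (rank_leq_col _).
Qed.

Lemma mr_bounds (n : nat) (e : rel 'I_n) : simple_graph e ->
  (mr e <= mr_plus e)%N /\ (mr_plus e <= mvr e)%N.
Proof.
move=> [esym _].
have ex : exists d, has_ortho_rep e d by exists #|{: 'I_n * 'I_n}|; exact: rep_exists.
have [phi rep] := least_natP ex.
have [M [Mp Mf Mr]] := gram_psd rep.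
have hp : (mr_plus e <= \rank M)%N by apply: least_nat_le; exists M.
split; last exact: leq_trans hp Mr.
have [M' [M'p M'f M'r]] : exists M' : 'M[CC]_n,
    [/\ psd M', fits e M' & \rank M' = mr_plus e].
  apply: (@least_natP (fun r => exists M' : 'M[CC]_n,
    [/\ psd M', fits e M' & \rank M' = r])).
  by exists (\rank M), M.
by apply: least_nat_le; exists M'; split => //; case: M'p.
Qed.

Theorem proposition3p4 :
  (forall (n : nat) (e : rel 'I_n), (0 < n)%N -> simple_graph e ->
     complement_critical e -> (mvr e + mvr (compl_graph e) <= n + 2)%N) ->
  forall (n : nat) (e : rel 'I_n), (0 < n)%N -> simple_graph e ->
    [/\ (mvr e + mvr (compl_graph e) <= n + 2)%N,
        (mr_plus e + mr_plus (compl_graph e) <= n + 2)%N &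
        (mr e + mr (compl_graph e) <= n + 2)%N].
Proof.
move=> Hcc n e n0 sg.
have cs : simple_graph (compl_graph e).
  case: sg => esym eirr; split.
    by move=> x y; rewrite /compl_graph eq_sym esym.
  by move=> x; rewrite /compl_graph eqxx.
have H1 := mvr_main Hcc n0 sg.
have [a1 a2] := mr_bounds sg; have [b1 b2] := mr_bounds cs.
have H2 : (mr_plus e + mr_plus (compl_graph e) <= n + 2)%N.
  exact: leq_trans (leq_add a2 b2) H1.
split => //; exact: leq_trans (leq_add a1 b1) H2.
Qed.
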